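(* For every configuration $C$ of the Krivine Abstract Machine, $C \to^{*} \langle \lambda x.t, []\rangle$ for some $x$ and $t$ if and only if $[\![C]\!]$ has a weak observable action on the coname $\overline{b}$ with respect to the empty set of hidden names, i.e., there exist $P', Q, R$ with $[\![C]\!] \Rightarrow P'$ and $P' \xrightarrow{\overline{b}\langle Q\rangle} R$.
   Context: HOcore processes are given by $P,Q ::= a(x).P \mid \overline{a}\langle P\rangle \mid P \parallel Q \mid x \mid 0$, where $a,b,\dots$ are channel names and $x,y,\dots$ are process variables; $a(x).P$ binds $x$ in $P$; parallel composition is associative and commutative with unit $0$. The labelled transition system has labels $\tau$, $\overline{a}\langle P\rangle$ and $a(P)$, with rules: $\overline{a}\langle P\rangle \xrightarrow{\overline{a}\langle P\rangle} 0$; $a(x).Q \xrightarrow{a(P)} Q\{P/x\}$; if $P \xrightarrow{l} P'$ then $P\parallel Q \xrightarrow{l} P'\parallel Q$ (and symmetrically); if $P \xrightarrow{\overline{a}\langle R\rangle} P'$ and $Q \xrightarrow{a(R)} Q'$ then $P \parallel Q \xrightarrow{\tau} P'\parallel Q'$ (and symmetrically). $\Rightarrow$ is the reflexive transitive closure of $\xrightarrow{\tau}$. KAM: terms $t,s ::= x \mid t\,s \mid \lambda x.t$; stacks $\pi ::= t :: \pi \mid []$; configurations $C ::= \langle t, \pi\rangle$ with all terms closed. Transitions: $\langle t\,s, \pi\rangle \to \langle t, s :: \pi\rangle$ and $\langle \lambda x.t, s::\pi\rangle \to \langle t\{s/x\}, \pi\rangle$. Translation (channel names $c, hd, b$; $p$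 a fresh variable): $[\![[]]\!] = \overline{b}\langle 0\rangle$; $[\![t::\pi]\!] = \overline{hd}\langle [\![t]\!]\rangle \parallel \overline{c}\langle [\![\pi]\!]\rangle$; $[\![\langle t,\pi\rangle]\!] = [\![t]\!] \parallel \overline{c}\langle[\![\pi]\!]\rangle$; $[\![t\,s]\!] = c(p).([\![t]\!] \parallel \overline{c}\langle \overline{hd}\langle[\![s]\!]\rangle \parallel \overline{c}\langle p\rangle\rangle)$; $[\![\lambda x.t]\!] = c(p).(hd(x).[\![t]\!] \parallel p)$; $[\![x]\!] = x$. *)

(* Defs.v *)
From Stdlib Require Import List Arith Relations.
Import ListNotations.

Definition name := nat.
Definition pvar := nat.

Inductive proc : Type :=
| PInp : name -> pvar -> proc -> proc
| POut : name -> proc -> proc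
| PPar : proc -> proc -> proc
| PVar : pvar -> proc
| PNil : proc.

(* Substitution P{Q/x}.  It respects shadowing; it does not rename binders,
   which is harmless because all processes transmitted in the theorem are
   closed. *)
Fixpoint psubst (P : proc) (Q : proc) (x : pvar) : proc :=
  match P with
  | PInp a y P' => if Nat.eqb x y then PInp a y P' else PInp a y (psubst P' Q x)
  | POut a P' => POut a (psubst P' Q x)
  | PPar P1 P2 => PPar (psubst P1 Q x) (psubst P2 Q x)
  | PVar y => if Nat.eqb x y then Q else PVar y
  | PNil => PNil
  end.

Inductive label : Type :=
| LTau : label
| LOut : name -> proc -> label
| LInp : name -> proc -> label.

Inductive lts : proc -> label -> proc -> Prop :=
| lts_out : forall a P, lts (POut a P) (LOut a P) PNil
| lts_inp : forall a x Q P, lts (PInp a x Q) (LInp a P) (psubst Q P x)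
| lts_parL : forall P Q l P', lts P l P' -> lts (PPar P Q) l (PPar P' Q)
| lts_parR : forall P Q l Q', lts Q l Q' -> lts (PPar P Q) l (PPar P Q')
| lts_comL : forall P Q a R P' Q',
    lts P (LOut a R) P' -> lts Q (LInp a R) Q' -> lts (PPar P Q) LTau (PPar P' Q')
| lts_comR : forall P Q a R P' Q',
    lts P (LInp a R) P' -> lts Q (LOut a R) Q' -> lts (PPar P Q) LTau (PPar P' Q').

Definition wstep (P P' : proc) : Prop :=
  clos_refl_trans proc (fun X Y => lts X LTau Y) P P'.

Definition tvar := nat.

Inductive term : Type :=
| TVar : tvar -> term
| TApp : term -> term -> term
| TLam : tvar -> term -> term.

Fixpoint free_in (x : tvar) (t : term) : Prop :=
  match t with
  | TVar y => x = y
  | TApp t1 t2 => free_in x t1 \/ free_in x t2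
  | TLam y t' => x <> y /\ free_in x t'
  end.

Definition closed (t : term) : Prop := forall x, ~ free_in x t.

(* t{s/x}; s is closed in every use, so no capture can occur *)
Fixpoint tsubst (t : term) (s : term) (x : tvar) : term :=
  match t with
  | TVar y => if Nat.eqb x y then s else TVar y
  | TApp t1 t2 => TApp (tsubst t1 s x) (tsubst t2 s x)
  | TLam y t' => if Nat.eqb x y then TLam y t' else TLam y (tsubst t' s x)
  end.

Definition stack := list term.
Definition config := (term * stack)%type.

Definition closed_config (C : config) : Prop :=
  closed (fst C) /\ Forall closed (snd C).

Inductive kam_step : config -> config -> Prop :=
| kam_push : forall t s pi, kam_step (TApp t s, pi) (t, s :: pi)
| kam_grab : forall x t s pi, kam_step (TLam x t, s :: pi) (tsubst t s x, pi).

Definition kam_star : config -> config -> Prop := clos_refl_trans config kam_step.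

Definition ch_c : name := 0.
Definition ch_hd : name := 1.
Definition ch_b : name := 2.

(* process variables: term variable x is encoded as S x; the fresh variable
   p is 0, hence distinct from every encoded term variable. *)
Definition pv_p : pvar := 0.
Definition pv_of (x : tvar) : pvar := S x.

Fixpoint tr_term (t : term) : proc :=
  match t with
  | TVar x => PVar (pv_of x)
  | TApp t s =>
      PInp ch_c pv_p
        (PPar (tr_term t)
              (POut ch_c (PPar (POut ch_hd (tr_term s)) (POut ch_c (PVar pv_p)))))
  | TLam x t =>
      PInp ch_c pv_p (PPar (PInp ch_hd (pv_of x) (tr_term t)) (PVar pv_p))
  end.

Fixpoint tr_stack (pi : stack) : proc :=
  match pi with
  | [] => POut ch_b PNil
  | t :: pi' => PPar (POut ch_hd (tr_term t)) (POut ch_c (tr_stack pi'))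
  end.

Definition tr_config (C : config) : proc :=
  PPar (tr_term (fst C)) (POut ch_c (tr_stack (snd C))).

(* Main.v *)
Require Import Defs.
From Stdlib Require Import List Arith Relations Permutation Setoid Morphisms.
Import ListNotations.

Fixpoint flat (P : proc) : list proc :=
  match P with
  | PPar P1 P2 => flat P1 ++ flat P2
  | PNil => []
  | _ => [P]
  end.

Definition spec (l : label) (P P' : proc) : Prop :=
  match l with
  | LOut a R => Permutation (flat P) (POut a R :: flat P')
  | LInp a R => exists x B rest, Permutation (flat P) (PInp a x B :: rest) /\
       Permutation (flat P') (flat (psubst B R x) ++ rest)
  | LTau => exists a R x B rest,
       Permutation (flat P) (POut a R :: PInp a x B :: rest) /\
       Permutation (flat P') (flat (psubst B R x) ++ rest)
  end.

Lemma lts_spec : forall P l P', lts P l P' -> spec l P P'.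
Proof.
  induction 1; simpl in *.
  - apply Permutation_refl.
  - exists x, Q, []. rewrite app_nil_r. split; apply Permutation_refl.
  - destruct l; simpl in *.
    + destruct IHlts as (a & R & x & B & rest & H1 & H2).
      exists a, R, x, B, (rest ++ flat Q). split.
      * rewrite H1. reflexivity.
      * rewrite H2, app_assoc. reflexivity.
    + rewrite IHlts. reflexivity.
    + destruct IHlts as (x & B & rest & H1 & H2).
      exists x, B, (rest ++ flat Q). split.
      * rewrite H1. reflexivity.
      * rewrite H2, app_assoc. reflexivity.
  - destruct l; simpl in *.
    + destruct IHlts as (a & R & x & B & rest & H1 & H2).
      exists a, R, x, B, (flat P ++ rest). split.
      * rewrite H1. rewrite <- Permutation_middle. apply perm_skip.
        rewrite <- Permutation_middle. reflexivity.
      * rewrite H2. apply Permutation_app_swap_app.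
    + rewrite IHlts. symmetry. apply Permutation_middle.
    + destruct IHlts as (x & B & rest & H1 & H2).
      exists x, B, (flat P ++ rest). split.
      * rewrite H1. symmetry. apply Permutation_middle.
      * rewrite H2. apply Permutation_app_swap_app.
  - destruct IHlts2 as (x & B & rest & H1 & H2).
    exists a, R, x, B, (flat P' ++ rest). split.
    + rewrite IHlts1, H1. simpl. apply perm_skip.
      symmetry. apply Permutation_middle.
    + rewrite H2. apply Permutation_app_swap_app.
  - destruct IHlts1 as (x & B & rest & H1 & H2).
    exists a, R, x, B, (rest ++ flat Q'). split.
    + rewrite IHlts2, H1. simpl. rewrite perm_swap. apply perm_skip.
      symmetry. apply Permutation_middle.
    + rewrite H2. rewrite app_assoc. reflexivity.
Qed.

Lemma out_ex : forall P a R, In (POut a R) (flat P) -> exists P', lts P (LOut a R) P'.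
Proof.
  induction P; simpl; intros a0 R H.
  - destruct H as [H|[]]; discriminate.
  - destruct H as [H|[]]; inversion H; subst. eexists; constructor.
  - apply in_app_or in H as [H|H].
    + destruct (IHP1 _ _ H) as [P' HP]. eexists; apply lts_parL; eauto.
    + destruct (IHP2 _ _ H) as [P' HP]. eexists; apply lts_parR; eauto.
  - destruct H as [H|[]]; discriminate.
  - destruct H.
Qed.

Lemma inp_ex : forall P a x B R, In (PInp a x B) (flat P) -> exists P', lts P (LInp a R) P'.
Proof.
  induction P; simpl; intros a0 x B R H.
  - destruct H as [H|[]]; inversion H; subst. eexists; constructor.
  - destruct H as [H|[]]; discriminate.
  - apply in_app_or in H as [H|H].
    + destruct (IHP1 _ _ _ R H) as [P' HP]. eexists; apply lts_parL; eauto.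
    + destruct (IHP2 _ _ _ R H) as [P' HP]. eexists; apply lts_parR; eauto.
  - destruct H as [H|[]]; discriminate.
  - destruct H.
Qed.

Lemma tau_ex : forall P a R x B, In (POut a R) (flat P) -> In (PInp a x B) (flat P) ->
  exists P', lts P LTau P'.
Proof.
  induction P; simpl; intros a0 R x B H1 H2.
  - destruct H1 as [H|[]]; discriminate.
  - destruct H2 as [H|[]]; discriminate.
  - apply in_app_or in H1 as [H1|H1]; apply in_app_or in H2 as [H2|H2].
    + destruct (IHP1 _ _ _ _ H1 H2) as [P' HP]. eexists; apply lts_parL; eauto.
    + destruct (out_ex _ _ _ H1) as [P' HP]. destruct (inp_ex _ _ _ _ R H2) as [Q' HQ].
      eexists; eapply lts_comL; eauto.
    + destruct (out_ex _ _ _ H1) as [P' HP]. destruct (inp_ex _ _ _ _ R H2) as [Q' HQ].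
      eexists; eapply lts_comR; eauto.
    + destruct (IHP2 _ _ _ _ H1 H2) as [P' HP]. eexists; apply lts_parR; eauto.
  - destruct H1 as [H|[]]; discriminate.
  - destruct H1.
Qed.

Lemma tau_push : forall P P' B Pi, Permutation (flat P) [PInp ch_c pv_p B; POut ch_c Pi] ->
  lts P LTau P' -> Permutation (flat P') (flat (psubst B Pi pv_p)).
Proof.
  intros P P' B Pi Hp Ht. apply lts_spec in Ht.
  destruct Ht as (a & R & x & B' & rest & H1 & H2).
  assert (H3 : Permutation [PInp ch_c pv_p B; POut ch_c Pi] (POut a R :: PInp a x B' :: rest))
    by (rewrite <- Hp; exact H1).
  assert (Hi : In (PInp a x B') [PInp ch_c pv_p B; POut ch_c Pi])
    by (apply (Permutation_in _ (Permutation_sym H3)); simpl; auto).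
  assert (Ho : In (POut a R) [PInp ch_c pv_p B; POut ch_c Pi])
    by (apply (Permutation_in _ (Permutation_sym H3)); simpl; auto).
  simpl in Hi, Ho.
  destruct Hi as [Hi|[Hi|[]]]; [|discriminate]. inversion Hi; subst.
  destruct Ho as [Ho|[Ho|[]]]; [discriminate|]. inversion Ho; subst.
  apply Permutation_length in H3. simpl in H3.
  destruct rest; [|discriminate]. rewrite app_nil_r in H2. exact H2.
Qed.

Lemma tau_grab : forall P P' y T S Pi,
  Permutation (flat P) [PInp ch_hd y T; POut ch_hd S; POut ch_c Pi] ->
  lts P LTau P' -> Permutation (flat P') (flat (psubst T S y) ++ [POut ch_c Pi]).
Proof.
  intros P P' y T S Pi Hp Ht. apply lts_spec in Ht.
  destruct Ht as (a & R & x & B' & rest & H1 & H2).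
  assert (H3 : Permutation [PInp ch_hd y T; POut ch_hd S; POut ch_c Pi] (POut a R :: PInp a x B' :: rest))
    by (rewrite <- Hp; exact H1).
  assert (Hi : In (PInp a x B') [PInp ch_hd y T; POut ch_hd S; POut ch_c Pi])
    by (apply (Permutation_in _ (Permutation_sym H3)); simpl; auto).
  assert (Ho : In (POut a R) [PInp ch_hd y T; POut ch_hd S; POut ch_c Pi])
    by (apply (Permutation_in _ (Permutation_sym H3)); simpl; auto).
  simpl in Hi, Ho.
  destruct Hi as [Hi|[Hi|[Hi|[]]]]; try discriminate. inversion Hi; subst.
  destruct Ho as [Ho|[Ho|[Ho|[]]]]; try discriminate; inversion Ho; subst.
  all: try (unfold ch_c, ch_hd in *; discriminate).
  rewrite perm_swap in H3. apply Permutation_cons_inv, Permutation_cons_inv in H3.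
  rewrite H2, H3. reflexivity.
Qed.

Lemma stuck_var : forall P P' v Pi, Permutation (flat P) [PVar v; POut ch_c Pi] ->
  ~ lts P LTau P'.
Proof.
  intros P P' v Pi Hp Ht. apply lts_spec in Ht.
  destruct Ht as (a & R & x & B' & rest & H1 & H2).
  assert (Hi : In (PInp a x B') [PVar v; POut ch_c Pi])
    by (apply (Permutation_in _ Hp); rewrite H1; simpl; auto).
  simpl in Hi. destruct Hi as [Hi|[Hi|[]]]; discriminate.
Qed.

Lemma stuck_nil : forall P P' y T, Permutation (flat P) [PInp ch_hd y T; POut ch_b PNil] ->
  ~ lts P LTau P'.
Proof.
  intros P P' y T Hp Ht. apply lts_spec in Ht.
  destruct Ht as (a & R & x & B' & rest & H1 & H2).
  assert (Hi : In (PInp a x B') [PInp ch_hd y T; POut ch_b PNil])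
    by (apply (Permutation_in _ Hp); rewrite H1; simpl; auto).
  assert (Ho : In (POut a R) [PInp ch_hd y T; POut ch_b PNil])
    by (apply (Permutation_in _ Hp); rewrite H1; simpl; auto).
  simpl in Hi, Ho.
  destruct Hi as [Hi|[Hi|[]]]; try discriminate. inversion Hi; subst.
  destruct Ho as [Ho|[Ho|[]]]; try discriminate; inversion Ho.
  all: try (unfold ch_b, ch_hd in *; discriminate).
Qed.

Lemma psubst_p : forall t Q, psubst (tr_term t) Q pv_p = tr_term t.
Proof. induction t; intros; reflexivity. Qed.

Lemma psubst_tr : forall t s x, psubst (tr_term t) (tr_term s) (pv_of x) = tr_term (tsubst t s x).
Proof.
  induction t; intros s x; simpl.
  - unfold pv_of. simpl. destruct (Nat.eqb x t); reflexivity.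
  - cbn. rewrite IHt1, IHt2. reflexivity.
  - cbn. destruct (Nat.eqb x t); simpl; [reflexivity|]. rewrite IHt. reflexivity.
Qed.

Definition Inv (C : config) (P : proc) : Prop :=
  (exists C', kam_star C C' /\ Permutation (flat P) (flat (tr_config C'))) \/
  (exists x t pi, kam_star C (TLam x t, pi) /\
     Permutation (flat P) (PInp ch_hd (pv_of x) (tr_term t) :: flat (tr_stack pi))).

Lemma inv_step : forall C P P', Inv C P -> lts P LTau P' -> Inv C P'.
Proof.
  intros C P P' [(C' & Hk & Hp) | (x & t & pi & Hk & Hp)] Ht.
  - destruct C' as [t pi]. destruct t as [v|t1 t2|x t].
    + exfalso. exact (stuck_var _ _ _ _ Hp Ht).
    + pose proof (tau_push _ _ _ _ Hp Ht) as H. left.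
      exists (t1, t2 :: pi). split.
      * eapply rt_trans; [exact Hk|]. apply rt_step. constructor.
      * rewrite H. cbn. rewrite !psubst_p. reflexivity.
    + pose proof (tau_push _ _ _ _ Hp Ht) as H. right.
      exists x, t, pi. split; [exact Hk|].
      rewrite H. cbn. rewrite !psubst_p. reflexivity.
  - destruct pi as [|s pi].
    + exfalso. exact (stuck_nil _ _ _ _ Hp Ht).
    + pose proof (tau_grab _ _ _ _ _ _ Hp Ht) as H. left.
      exists (tsubst t s x, pi). split.
      * eapply rt_trans; [exact Hk|]. apply rt_step. constructor.
      * rewrite H, psubst_tr. reflexivity.
Qed.

Lemma inv_star : forall P P', wstep P P' -> forall C, Inv C P -> Inv C P'.
Proof.
  induction 1; intros C HI; eauto using inv_step.
Qed.

Lemma fwd : forall C C', clos_refl_trans_1n _ kam_step C C' ->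
  forall x t, C' = (TLam x t, []) ->
  forall P, Permutation (flat P) (flat (tr_config C)) ->
  exists P' Q R, wstep P P' /\ lts P' (LOut ch_b Q) R.
Proof.
  induction 1 as [C|C C1 C' Hs Hr IH]; intros x t HC P Hp; subst.
  - simpl in Hp.
    destruct (tau_ex P ch_c (POut ch_b PNil) pv_p (PPar (PInp ch_hd (pv_of x) (tr_term t)) (PVar pv_p)))
      as [P1 H1].
    + apply (Permutation_in _ (Permutation_sym Hp)). simpl; auto.
    + apply (Permutation_in _ (Permutation_sym Hp)). simpl; auto.
    + pose proof (tau_push _ _ _ _ Hp H1) as H. cbn in H.
      destruct (out_ex P1 ch_b PNil) as [R HR].
      * apply (Permutation_in _ (Permutation_sym H)). simpl; auto.
      * exists P1, PNil, R. split; [apply rt_step; exact H1| exact HR].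
  - inversion Hs; subst.
    + simpl in Hp.
      destruct (tau_ex P ch_c (tr_stack pi) pv_p
        (PPar (tr_term t0) (POut ch_c (PPar (POut ch_hd (tr_term s)) (POut ch_c (PVar pv_p))))))
        as [P1 H1].
      * apply (Permutation_in _ (Permutation_sym Hp)). simpl; auto.
      * apply (Permutation_in _ (Permutation_sym Hp)). simpl; auto.
      * pose proof (tau_push _ _ _ _ Hp H1) as H. cbn in H. rewrite !psubst_p in H.
        destruct (IH x t eq_refl P1 H) as (P' & Q & R & HW & HL).
        exists P', Q, R. split; [|exact HL].
        eapply rt_trans; [apply rt_step; exact H1| exact HW].
    + simpl in Hp.
      destruct (tau_ex P ch_c (tr_stack (s :: pi)) pv_p
        (PPar (PInp ch_hd (pv_of x0) (tr_term t0)) (PVar pv_p)))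
        as [P1 H1].
      * apply (Permutation_in _ (Permutation_sym Hp)). simpl; auto.
      * apply (Permutation_in _ (Permutation_sym Hp)). simpl; auto.
      * pose proof (tau_push _ _ _ _ Hp H1) as H. cbn in H. rewrite !psubst_p in H.
        destruct (tau_ex P1 ch_hd (tr_term s) (pv_of x0) (tr_term t0)) as [P2 H2].
        -- apply (Permutation_in _ (Permutation_sym H)). simpl; auto.
        -- apply (Permutation_in _ (Permutation_sym H)). simpl; auto.
        -- pose proof (tau_grab _ _ _ _ _ _ H H2) as H'. rewrite psubst_tr in H'.
           destruct (IH x t eq_refl P2 H') as (P' & Q & R & HW & HL).
           exists P', Q, R. split; [|exact HL].
           eapply rt_trans; [apply rt_step; exact H1|].
           eapply rt_trans; [apply rt_step; exact H2| exact HW].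
Qed.

Theorem corollary3p2 : forall C : config, closed_config C ->
  ((exists x t, kam_star C (TLam x t, nil)) <->
   (exists P' Q R, wstep (tr_config C) P' /\ lts P' (LOut ch_b Q) R)).
Proof.
  intros C _. split.
  - intros (x & t & Hk). apply clos_rt_rt1n in Hk.
    exact (fwd _ _ Hk x t eq_refl _ (Permutation_refl _)).
  - intros (P' & Q & R & HW & HL).
    assert (HI : Inv C P').
    { apply (inv_star _ _ HW). left. exists C. split; [apply rt_refl| reflexivity]. }
    apply lts_spec in HL. simpl in HL.
    assert (Hin : In (POut ch_b Q) (flat P')) by (rewrite HL; simpl; auto).
    destruct HI as [(C' & Hk & Hp) | (x & t & pi & Hk & Hp)].
    + exfalso. apply (Permutation_in _ Hp) in Hin. destruct C' as [t pi].
      destruct t; simpl in Hin;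
        (destruct Hin as [H|[H|[]]]; inversion H; unfold ch_b, ch_c in *; discriminate).
    + destruct pi as [|s pi].
      * exists x, t. exact Hk.
      * exfalso. apply (Permutation_in _ Hp) in Hin. simpl in Hin.
        destruct Hin as [H|[H|[H|[]]]]; inversion H; unfold ch_b, ch_c, ch_hd in *; discriminate.
Qed.
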